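(* Let $k$ be a finite field of odd characteristic, let $A(t)\in k[t]$ be a square-free polynomial of odd degree $d>1$, and suppose that its derivative satisfies $A'(t)\equiv \gamma$ for some constant $\gamma\in k^*$. Let $E:y^2=f(x)$ be an elliptic curve defined over $k$, with $f(x)\in k[x]$ cubic, and let $E_A$ be the elliptic curve over $k(t)$ defined by $A(t)y^2=f(x)$. Suppose $(F,G)$ is an integral point of $E_A$ (i.e. $F,G\in k[t]$ with $A(t)G(t)^2=f(F(t))$) satisfying $F'\neq 0$. Then the following three conditions are equivalent: (A) $2 \deg F \leq d-1$; (B) $2 \deg G \leq \deg F-1$; (C) $G^2=\beta F'$ for some $\beta\in k^*$. Furthermore, if one of these conditions holds, then $j(E)=1728$.
   Context: $F'$ denotes the derivative of $F$ with respect to $t$; $j(E)$ is the $j$-invariant of $E$. *)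

(* Defs.v *)
From HB Require Import structures.
From mathcomp Require Import all_boot all_order all_algebra all_field.
Set Implicit Arguments. Unset Strict Implicit. Unset Printing Implicit Defensive.
Import GRing.Theory.
Local Open Scope ring_scope.

Definition squarefree_poly (R : fieldType) (p : {poly R}) : Prop :=
  forall g : {poly R}, g * g %| p -> (size g <= 1)%N.

(* The curve y^2 = f(x), f = a x^3 + b x^2 + c x + e (a <> 0), is isomorphic
   (via (x,y) |-> (a x, a y)) to the Weierstrass model
   Y^2 = X^3 + a2 X^2 + a4 X + a6 with a2 = b, a4 = a c, a6 = a^2 e. *)
Section Weierstrass.
Variable (R : fieldType) (f : {poly R}).
Definition wa2 := f`_2.
Definition wa4 := f`_3 * f`_1.
Definition wa6 := f`_3 ^+ 2 * f`_0.
Definition wb2 := 4 * wa2.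
Definition wb4 := 2 * wa4.
Definition wb6 := 4 * wa6.
Definition wb8 := 4 * wa2 * wa6 - wa4 ^+ 2.
Definition wc4 := wb2 ^+ 2 - 24 * wb4.
Definition wdisc := - wb2 ^+ 2 * wb8 - 8 * wb4 ^+ 3 - 27 * wb6 ^+ 2
                    + 9 * wb2 * wb4 * wb6.
Definition j_inv := wc4 ^+ 3 / wdisc.
End Weierstrass.

Definition is_elliptic_cubic (R : fieldType) (f : {poly R}) : Prop :=
  size f = 4%N /\ wdisc f != 0.

(* Main.v *)
Require Import Defs.
From HB Require Import structures.
From mathcomp Require Import all_boot all_order all_algebra all_field.
From mathcomp Require Import ring zify.
Import GRing.Theory.
Local Open Scope ring_scope.
Set Implicit Arguments. Unset Strict Implicit.

Lemma theta_form (L : fieldType) (A F G H f : {poly L}) (gamma e : L) :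
  gamma%:P * G + 2%:R * A * G^`() = (f^`() \Po F) * H ->
  exists R, gamma%:P * G - (f^`().[e])%:P * H = (F - e%:P) * R + A * (- (2%:R * G^`())).
Proof.
move=> hs.
have : root (f^`() - (f^`().[e])%:P) e by rewrite /root !hornerE subrr.
case/factor_theorem=> q hq.
have hf' : f^`() = q * ('X - e%:P) + (f^`().[e])%:P by rewrite -hq subrK.
exists ((q \Po F) * H).
have : gamma%:P * G = (f^`() \Po F) * H - 2%:R * A * G^`() by rewrite -hs addrK.
move=> ->; set c := f^`().[e]; rewrite [f^`()]hf' comp_polyD comp_polyM comp_polyB comp_polyX !comp_polyC.
ring.
Qed.

Lemma dvd_prod3 (L : fieldType) (A Y1 Y2 Y3 R1 R2 R3 S1 S2 S3 : {poly L}) :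
  A %| Y1 * Y2 * Y3 ->
  A %| (Y1 * R1 + A * S1) * (Y2 * R2 + A * S2) * (Y3 * R3 + A * S3).
Proof.
move=> h.
have -> : (Y1 * R1 + A * S1) * (Y2 * R2 + A * S2) * (Y3 * R3 + A * S3) =
  Y1 * Y2 * Y3 * (R1 * R2 * R3) + A * (S1 * (Y2 * R2 + A * S2) * (Y3 * R3 + A * S3)
   + Y1 * R1 * S2 * (Y3 * R3 + A * S3) + Y1 * R1 * Y2 * R2 * S3) by ring.
by apply: dvdp_add; [exact: dvdp_mulr | exact: dvdp_mulIl].
Qed.

Lemma core_sizes (L : fieldType) (G H : {poly L}) (c1 c2 : L) :
  (size (c1%:P * G - c2%:P * H)%R <= maxn (size G) (size H))%N.
Proof.
rewrite !mul_polyC; apply: leq_trans (size_polyD _ _) _.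
by rewrite size_polyN geq_max !leq_max !size_scale_leq ?orbT.
Qed.

Lemma prod_dvd (L : fieldType) (A F G f : {poly L}) (a e1 e2 e3 : L) :
  a != 0 ->
  f = a *: (('X - e1%:P) * ('X - e2%:P) * ('X - e3%:P)) ->
  A * G ^+ 2 = f \Po F ->
  A %| (F - e1%:P) * (F - e2%:P) * (F - e3%:P).
Proof.
move=> a0 -> h.
have : (F - e1%:P) * (F - e2%:P) * (F - e3%:P) = a^-1 *: (A * G ^+ 2).
  by rewrite h comp_polyZ !comp_polyM !comp_polyB comp_polyX !comp_polyC scalerA mulVf // scale1r.
by move=> ->; rewrite dvdpZr ?invr_eq0 // dvdp_mulIl.
Qed.

Lemma core_step7 (L : fieldType) (A F G H f : {poly L}) (gamma a e1 e2 e3 : L) :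
  a != 0 ->
  f = a *: (('X - e1%:P) * ('X - e2%:P) * ('X - e3%:P)) ->
  A * G ^+ 2 = f \Po F ->
  gamma%:P * G + 2%:R * A * G^`() = (f^`() \Po F) * H ->
  F^`() = G * H ->
  F^`() != 0 ->
  ((size A).-1 + 2 * (size G).-1 = 3 * (size F).-1)%N ->
  (2 * (size G).-1 <= (size F).-1 - 1)%N ->
  (gamma%:P * G - (f^`().[e1])%:P * H == 0) ||
  (gamma%:P * G - (f^`().[e2])%:P * H == 0) ||
  (gamma%:P * G - (f^`().[e3])%:P * H == 0).
Proof.
move=> a0 hf h hs hGH dF hd hB.
set t1 := _ - _ * H; set t2 := _ - _ * H; set t3 := _ - _ * H.
have F0 : F != 0 by apply: contraNneq dF => ->; rewrite deriv0.
have ltF := lt_size_deriv F0.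
have G0 : G != 0 by apply: contraNneq dF; rewrite hGH => ->; rewrite mul0r.
have H0 : H != 0 by apply: contraNneq dF; rewrite hGH => ->; rewrite mulr0.
have sGH : size F^`() = (size G + size H).-1 by rewrite hGH size_mul.
have hdvd : A %| t1 * t2 * t3.
  rewrite /t1 /t2 /t3.
  have [R1 ->] := theta_form e1 hs.
  have [R2 ->] := theta_form e2 hs.
  have [R3 ->] := theta_form e3 hs.
  by apply: dvd_prod3; apply: (prod_dvd a0 hf h).
apply/negPn/negP; rewrite !negb_or => /andP[/andP[n1 n2] n3].
have P0 : t1 * t2 * t3 != 0 by rewrite !mulf_neq0.
have := dvdp_leq P0 hdvd.
rewrite !size_mul ?mulf_neq0 //.
have := core_sizes G H gamma (f^`().[e1]).
have := core_sizes G H gamma (f^`().[e2]).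
have := core_sizes G H gamma (f^`().[e3]).
rewrite -/t1 -/t2 -/t3.
move: (size_poly_gt0 G) (size_poly_gt0 H) (size_poly_gt0 t1) (size_poly_gt0 t2) (size_poly_gt0 t3).
rewrite G0 H0 n1 n2 n3.
move: hd hB ltF sGH.
set sA := size A; set sG := size G; set sH := size H; set sF := size F; set sF' := size F^`().
set s1 := size t1; set s2 := size t2; set s3 := size t3.
clearbody sA sG sH sF sF' s1 s2 s3.
lia.
Qed.

Lemma core_step8 (L : fieldType) (A F G H f : {poly L}) (gamma a e1 e2 e3 : L) :
  a != 0 ->
  f = a *: (('X - e1%:P) * ('X - e2%:P) * ('X - e3%:P)) ->
  A * G ^+ 2 = f \Po F ->
  gamma%:P * G + 2%:R * A * G^`() = (f^`() \Po F) * H ->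
  F^`() = G * H ->
  F^`() != 0 ->
  ((size A).-1 + 2 * (size G).-1 = 3 * (size F).-1)%N ->
  gamma%:P * G - (f^`().[e1])%:P * H = 0 ->
  (gamma%:P * G - (f^`().[e2])%:P * H == 0) ||
  (gamma%:P * G - (f^`().[e3])%:P * H == 0).
Proof.
move=> a0 hf h hs hGH dF hd h1.
set t2 := _ - _ * H; set t3 := _ - _ * H.
have F0 : F != 0 by apply: contraNneq dF => ->; rewrite deriv0.
have ltF := lt_size_deriv F0.
have G0 : G != 0 by apply: contraNneq dF; rewrite hGH => ->; rewrite mul0r.
have H0 : H != 0 by apply: contraNneq dF; rewrite hGH => ->; rewrite mulr0.
have sGH : size F^`() = (size G + size H).-1 by rewrite hGH size_mul.
have Fe0 : F - e1%:P != 0.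
  by apply: contraNneq dF => /eqP; rewrite subr_eq0 => /eqP ->; rewrite derivC.
have sFe : (size (F - e1%:P)%R <= size F)%N.
  apply: leq_trans (size_polyD _ _) _; rewrite size_polyN size_polyC geq_max leqnn /=.
  by case: (e1 != 0) => //; rewrite size_poly_gt0.
have hdvd : A %| (F - e1%:P) * t2 * t3.
  rewrite /t2 /t3.
  have [R2 ->] := theta_form e2 hs.
  have [R3 ->] := theta_form e3 hs.
  have -> : F - e1%:P = (F - e1%:P) * 1 + A * 0 by rewrite mulr1 mulr0 addr0.
  by apply: dvd_prod3; apply: (prod_dvd a0 hf h).
have hG : gamma%:P * G = (f^`().[e1])%:P * H by apply/eqP; rewrite -subr_eq0 h1.
have st2 : (size t2 <= size H)%N by rewrite /t2 hG -mulrBl -polyCB mul_polyC size_scale_leq.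
have st3 : (size t3 <= size H)%N by rewrite /t3 hG -mulrBl -polyCB mul_polyC size_scale_leq.
apply/negPn/negP; rewrite !negb_or => /andP[n2 n3].
have P0 : (F - e1%:P) * t2 * t3 != 0 by rewrite !mulf_neq0.
have := dvdp_leq P0 hdvd.
rewrite !size_mul ?mulf_neq0 //.
move: (size_poly_gt0 G) (size_poly_gt0 H) (size_poly_gt0 t2) (size_poly_gt0 t3) (size_poly_gt0 (F - e1%:P)).
rewrite G0 H0 n2 n3 Fe0.
move: hd ltF sGH st2 st3 sFe.
set sA := size A; set sG := size G; set sH := size H; set sF := size F; set sF' := size F^`().
set s2 := size t2; set s3 := size t3; set s1 := size (F - e1%:P).
clearbody sA sG sH sF sF' s1 s2 s3.
lia.
Qed.

Lemma core_H (L : fieldType) (A F G f : {poly L}) (gamma a e1 e2 e3 : L) :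
  a != 0 -> uniq [:: e1; e2; e3] ->
  f = a *: (('X - e1%:P) * ('X - e2%:P) * ('X - e3%:P)) ->
  A^`() = gamma%:P ->
  A * G ^+ 2 = f \Po F -> F^`() != 0 ->
  exists H, F^`() = G * H /\
    gamma%:P * G + 2%:R * A * G^`() = (f^`() \Po F) * H.
Proof.
move=> a0 un hf dA h dF.
have Fe0 e : F - e%:P != 0.
  by apply: contraNneq dF => /eqP; rewrite subr_eq0 => /eqP ->; rewrite derivC.
have G0 : G != 0.
  apply: contraNneq a0 => G0; move: h; rewrite G0 expr0n /= mulr0 hf comp_polyZ.
  rewrite !comp_polyM !comp_polyB comp_polyX !comp_polyC => /esym/eqP.
  by rewrite scaler_eq0 !mulf_eq0 !(negbTE (Fe0 _)) !orbF.
have sep : coprimep f f^`().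
  have : separable_poly (\prod_(z <- [:: e1; e2; e3]) ('X - z%:P)).
    by rewrite separable_prod_XsubC.
  rewrite -(eqp_separable (eqp_scale _ a0)) !big_cons big_nil mulr1 !mulrA -hf.
  by rewrite unlock.
have [[u v] /= huv] := Bezout_coprimepP _ _ sep.
move: huv; rewrite -size_poly_eq1 => /size_poly1P [c c0 hc].
have hD : (f^`() \Po F) * F^`() = gamma%:P * G ^+ 2 + 2%:R * A * G * G^`().
  rewrite -deriv_comp -h derivM dA expr2 derivM; ring.
have hc' : c%:P = (u \Po F) * (f \Po F) + (v \Po F) * (f^`() \Po F).
  by rewrite -[c%:P](comp_polyC c F) -hc comp_polyD !comp_polyM.
pose W := (u \Po F) * A * G * F^`() + (v \Po F) * (gamma%:P * G + 2%:R * A * G^`()).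
have hW : c%:P * F^`() = G * W.
  rewrite hc' -h.
  have -> : ((u \Po F) * (A * G ^+ 2) + (v \Po F) * (f^`() \Po F)) * F^`() =
    (u \Po F) * (A * G ^+ 2) * F^`() + (v \Po F) * ((f^`() \Po F) * F^`()) by ring.
  rewrite hD /W; ring.
exists (c^-1%:P * W).
have hGH : F^`() = G * (c^-1%:P * W).
  by rewrite mulrCA -hW mulrA -polyCM mulVf // mul1r.
split=> //.
apply: (mulfI G0).
have -> : G * ((f^`() \Po F) * (c^-1%:P * W)) = (f^`() \Po F) * (G * (c^-1%:P * W)) by ring.
rewrite -hGH hD; ring.
Qed.

Lemma cubic_expand (L : fieldType) (a e1 e2 e3 : L) :
  a *: (('X - e1%:P) * ('X - e2%:P) * ('X - e3%:P)) =
  a *: 'X^3 + (- a * (e1 + e2 + e3)) *: 'X^2 + (a * (e1 * e2 + e1 * e3 + e2 * e3)) *: 'X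
  + (- a * e1 * e2 * e3)%:P.
Proof.
rewrite -!mul_polyC !polyCM !polyCN !polyCD !polyCM. ring.
Qed.

Lemma fder_eq (L : fieldType) (f : {poly L}) (a e1 e2 e3 : L) :
  a != 0 -> e1 != e2 ->
  f = a *: (('X - e1%:P) * ('X - e2%:P) * ('X - e3%:P)) ->
  f^`().[e1] = f^`().[e2] -> e1 + e2 = 2%:R * e3.
Proof.
move=> a0 e12 -> /eqP; rewrite -subr_eq0 => /eqP h.
have : a * (e1 - e2) * (e1 + e2 - 2%:R * e3) = 0.
  rewrite -h cubic_expand !derivD !derivZ !derivXn derivX derivC !hornerE /=; ring.
move/eqP; rewrite !mulf_eq0 (negbTE a0) subr_eq0 (negbTE e12) /= subr_eq0.
by move/eqP.
Qed.

Lemma coreL (L : fieldType) (A F G f : {poly L}) (gamma a e1 e2 e3 : L) :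
  a != 0 -> e1 != e2 -> e1 != e3 -> e2 != e3 -> gamma != 0 ->
  f = a *: (('X - e1%:P) * ('X - e2%:P) * ('X - e3%:P)) ->
  A^`() = gamma%:P -> A * G ^+ 2 = f \Po F -> F^`() != 0 ->
  ((size A).-1 + 2 * (size G).-1 = 3 * (size F).-1)%N ->
  (2 * (size G).-1 <= (size F).-1 - 1)%N ->
  (exists beta, beta != 0 /\ G ^+ 2 = beta%:P * F^`()) /\
  [\/ e1 + e2 = 2%:R * e3, e1 + e3 = 2%:R * e2 | e2 + e3 = 2%:R * e1].
Proof.
move=> a0 e12 e13 e23 g0 hf dA h dF hd hB.
have un : uniq [:: e1; e2; e3].
  by rewrite /= !inE negb_or e12 e13 e23.
have [H [hGH hs]] := core_H a0 un hf dA h dF.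
have G0 : G != 0 by apply: contraNneq dF; rewrite hGH => ->; rewrite mul0r.
have H0 : H != 0 by apply: contraNneq dF; rewrite hGH => ->; rewrite mulr0.
pose tz e := gamma%:P * G - (f^`().[e])%:P * H == 0.
have eqd x y : tz x -> tz y -> f^`().[x] = f^`().[y].
  move=> /eqP hx /eqP hy.
  have : (f^`().[y] - f^`().[x])%:P * H = 0.
    have -> : (f^`().[y] - f^`().[x])%:P * H =
      (gamma%:P * G - (f^`().[x])%:P * H) - (gamma%:P * G - (f^`().[y])%:P * H).
      by rewrite polyCB; ring.
    by rewrite hx hy subrr.
  move/eqP; rewrite mulf_eq0 (negbTE H0) orbF polyC_eq0 subr_eq0.
  by move/eqP.
have betaP x : tz x -> exists beta, beta != 0 /\ G ^+ 2 = beta%:P * F^`().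
  move=> /eqP hx.
  have hG : gamma%:P * G = (f^`().[x])%:P * H by apply/eqP; rewrite -subr_eq0 hx.
  exists (f^`().[x] / gamma); split.
    rewrite mulf_eq0 invr_eq0 (negbTE g0) orbF.
    apply: contraNneq G0 => hx0; move: hG; rewrite hx0 polyC0 mul0r => /eqP.
    by rewrite mulf_eq0 polyC_eq0 (negbTE g0) /=; apply.
  apply: (mulfI (_ : gamma%:P != 0)); first by rewrite polyC_eq0.
  rewrite [RHS]mulrA -polyCM [gamma * _]mulrC divfK // hGH expr2 mulrA hG; ring.
have hf213 : f = a *: (('X - e2%:P) * ('X - e1%:P) * ('X - e3%:P)).
  by rewrite hf; congr (_ *: _); ring.
have hf132 : f = a *: (('X - e1%:P) * ('X - e3%:P) * ('X - e2%:P)).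
  by rewrite hf; congr (_ *: _); ring.
have hf231 : f = a *: (('X - e2%:P) * ('X - e3%:P) * ('X - e1%:P)).
  by rewrite hf; congr (_ *: _); ring.
have hf312 : f = a *: (('X - e3%:P) * ('X - e1%:P) * ('X - e2%:P)).
  by rewrite hf; congr (_ *: _); ring.
have hf321 : f = a *: (('X - e3%:P) * ('X - e2%:P) * ('X - e1%:P)).
  by rewrite hf; congr (_ *: _); ring.
have e21 : e2 != e1 by rewrite eq_sym.
have e31 : e3 != e1 by rewrite eq_sym.
have e32 : e3 != e2 by rewrite eq_sym.
have s7 := core_step7 a0 hf h hs hGH dF hd hB.
case/orP: s7 => [/orP[] | ] t.
- split; first exact: betaP t.
  have /orP[] := core_step8 a0 hf h hs hGH dF hd (eqP t) => t'.
    by constructor 1; apply: (fder_eq a0 e12 hf); apply: eqd.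
  by constructor 2; apply: (fder_eq a0 e13 hf132); apply: eqd.
- split; first exact: betaP t.
  have /orP[] := core_step8 a0 hf213 h hs hGH dF hd (eqP t) => t'.
    by constructor 1; rewrite addrC; apply: (fder_eq a0 e21 hf213); apply: eqd.
  by constructor 3; apply: (fder_eq a0 e23 hf231); apply: eqd.
- split; first exact: betaP t.
  have /orP[] := core_step8 a0 hf312 h hs hGH dF hd (eqP t) => t'.
    by constructor 2; rewrite addrC; apply: (fder_eq a0 e31 hf312); apply: eqd.
  by constructor 3; rewrite addrC; apply: (fder_eq a0 e32 hf321); apply: eqd.
Qed.

Lemma wdisc_map (K L : fieldType) (phi : {rmorphism K -> L}) (f : {poly K}) :
  wdisc (map_poly phi f) = phi (wdisc f).
Proof.
rewrite /wdisc /wb2 /wb4 /wb6 /wb8 /wa2 /wa4 /wa6 !coef_map /=.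
rewrite !(rmorph_nat, rmorphB, rmorphD, rmorphM, rmorphN, rmorphXn) ?rmorph1; ring.
Qed.

Lemma j_map (K L : fieldType) (phi : {rmorphism K -> L}) (f : {poly K}) :
  j_inv (map_poly phi f) = phi (j_inv f).
Proof.
rewrite /j_inv fmorph_div wdisc_map; congr (_ / _).
rewrite /wc4 /wb2 /wb4 /wa2 /wa4 !coef_map /=.
rewrite !(rmorph_nat, rmorphB, rmorphD, rmorphM, rmorphN, rmorphXn) ?rmorph1; ring.
Qed.

Lemma cubic_coefs (L : fieldType) (f : {poly L}) (a e1 e2 e3 : L) :
  f = a *: (('X - e1%:P) * ('X - e2%:P) * ('X - e3%:P)) ->
  [/\ f`_3 = a, f`_2 = - a * (e1 + e2 + e3), f`_1 = a * (e1 * e2 + e1 * e3 + e2 * e3)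
    & f`_0 = - a * e1 * e2 * e3].
Proof.
move=> ->; rewrite cubic_expand.
by split; rewrite !coefD !coefZ !coefXn !coefX !coefC /=; ring.
Qed.

Lemma cubic_disc (L : fieldType) (f : {poly L}) (a e1 e2 e3 : L) :
  f = a *: (('X - e1%:P) * ('X - e2%:P) * ('X - e3%:P)) ->
  wdisc f = 16%:R * a ^+ 6 * ((e1 - e2) * (e1 - e3) * (e2 - e3)) ^+ 2.
Proof.
move=> /cubic_coefs [h3 h2 h1 h0].
rewrite /wdisc /wb2 /wb4 /wb6 /wb8 /wa2 /wa4 /wa6 h3 h2 h1 h0; ring.
Qed.

Lemma cubic_j (L : fieldType) (f : {poly L}) (a e1 e2 e3 : L) :
  f = a *: (('X - e1%:P) * ('X - e2%:P) * ('X - e3%:P)) ->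
  wdisc f != 0 -> e1 + e2 = 2%:R * e3 -> j_inv f = 1728%:R.
Proof.
move=> hf hD he.
have e : wc4 f ^+ 3 = 1728%:R * wdisc f.
  have [h3 h2 h1 h0] := cubic_coefs hf.
  rewrite /wc4 /wdisc /wb2 /wb4 /wb6 /wb8 /wa2 /wa4 /wa6 h3 h2 h1 h0.
  have -> : e1 = 2%:R * e3 - e2 by rewrite -he addrK.
  ring.
by rewrite /j_inv e mulfK.
Qed.



Lemma nat_fF (s sF : nat) : (1 < sF)%N -> s.-1 = (3 * sF.-1)%N -> (0 < s)%N.
Proof. lia. Qed.

Lemma nat_hd (sA sG sG2 sF : nat) : (0 < sA)%N -> (0 < sG)%N -> (0 < sG2)%N ->
  sG2.-1 = (sG.-1 * 2)%N -> (sA + sG2).-1.-1 = (3 * sF.-1)%N ->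
  (sA.-1 + 2 * sG.-1 = 3 * sF.-1)%N.
Proof. lia. Qed.

Lemma nat_AB (sA sG sF : nat) : (1 < sF)%N -> (sA.-1 + 2 * sG.-1 = 3 * sF.-1)%N ->
  ((2 * sF.-1 <= sA.-1 - 1)%N <-> (2 * sG.-1 <= sF.-1 - 1)%N).
Proof. split; lia. Qed.

Lemma nat_CB (sG sF sF' : nat) : (sF' < sF)%N -> (0 < sF')%N -> (0 < sG)%N ->
  sF'.-1 = (sG.-1 * 2)%N -> (2 * sG.-1 <= sF.-1 - 1)%N.
Proof. lia. Qed.

Unset Implicit Arguments.

Theorem theorem3p4 (k : finFieldType) (A f F G : {poly k}) (gamma : k) :
  ~~ (2%N \in [pchar k]) ->
  squarefree_poly A ->
  odd (size A).-1 -> (1 < (size A).-1)%N ->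
  gamma != 0 -> A^`() = gamma%:P ->
  is_elliptic_cubic f ->
  A * G ^+ 2 = f \Po F ->
  F^`() != 0 ->
  let d := (size A).-1 in
  let condA := (2 * (size F).-1 <= d - 1)%N in
  let condB := (2 * (size G).-1 <= (size F).-1 - 1)%N in
  let condC := exists beta : k, beta != 0 /\ G ^+ 2 = beta%:P * F^`() in
  (condA <-> condB) /\ (condB <-> condC) /\
  ((condA \/ condB \/ condC) -> j_inv f = 1728).
Proof.
move=> _ _ _ _ g0 dA [sf4 wd0] h dF d condA condB condC.
have F0 : F != 0 by apply: contraNneq dF => ->; rewrite deriv0.
have ltF := lt_size_deriv F0.
have sF2 : (1 < size F)%N.
  rewrite ltnNge; apply: contra dF => /size1_polyC ->; by rewrite derivC.
have f0 : f != 0 by rewrite -size_poly_gt0 sf4.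
have fF0 : f \Po F != 0.
  rewrite -size_poly_gt0; have := size_comp_poly f F; rewrite sf4 /=.
  exact: (nat_fF sF2).
have A0 : A != 0.
  by apply: contraNneq g0 => A0; move: dA; rewrite A0 deriv0 => /esym/eqP; rewrite polyC_eq0.
have G0 : G != 0.
  by apply: contraNneq fF0 => G0; rewrite -h G0 expr0n /= mulr0.
have hd : ((size A).-1 + 2 * (size G).-1 = 3 * (size F).-1)%N.
  have := size_comp_poly f F; rewrite -h size_mul ?expf_neq0 // sf4.
  have := size_exp G 2.
  apply: nat_hd; by rewrite size_poly_gt0 ?expf_neq0.
case: (FinSplittingFieldFor f0) => L [rs hrs _].
pose phi := in_alg L.
set fL := map_poly _ f in hrs.
have hsz := eqp_size hrs.
rewrite size_prod_XsubC /fL size_map_poly sf4 in hsz.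
case: rs hrs hsz => [|e1 [|e2 [|e3 [|? ?]]]] // hrs _.
rewrite !big_cons big_nil mulr1 !mulrA in hrs.
have [a a0 hf] : exists2 a, a != 0 & fL = a *: (('X - e1%:P) * ('X - e2%:P) * ('X - e3%:P)).
  case/eqpP: hrs => [[c1 c2] /= /andP[c10 c20] hc].
  exists (c1^-1 * c2); first by rewrite mulf_neq0 ?invr_eq0.
  by rewrite -scalerA -hc scalerA mulVf // scale1r.
have wdL : wdisc fL != 0 by rewrite /fL wdisc_map fmorph_eq0.
have e12 : e1 != e2.
  by apply: contraNneq wdL => he; rewrite (cubic_disc hf) he subrr !(mul0r, mulr0) expr2 !(mul0r, mulr0).
have e13 : e1 != e3.
  by apply: contraNneq wdL => he; rewrite (cubic_disc hf) he subrr !(mul0r, mulr0) expr2 !(mul0r, mulr0).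
have e23 : e2 != e3.
  by apply: contraNneq wdL => he; rewrite (cubic_disc hf) he subrr !(mul0r, mulr0) expr2 !(mul0r, mulr0).
set AL := map_poly (in_alg L) A; set FL := map_poly (in_alg L) F; set GL := map_poly (in_alg L) G.
have dAL : AL^`() = (in_alg L gamma)%:P by rewrite /AL deriv_map dA map_polyC.
have hL : AL * GL ^+ 2 = fL \Po FL by rewrite /fL -map_comp_poly -h rmorphM rmorphXn.
have dFL : FL^`() != 0 by rewrite /FL deriv_map map_poly_eq0.
have g0L : in_alg L gamma != 0 by rewrite fmorph_eq0.
have hdL : ((size AL).-1 + 2 * (size GL).-1 = 3 * (size FL).-1)%N by rewrite !size_map_poly.
have AB : condA <-> condB.
  exact: (nat_AB sF2 hd).
have keyL : condB -> condC /\ j_inv f = 1728.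
  move=> hB.
  have hBL : (2 * (size GL).-1 <= (size FL).-1 - 1)%N by rewrite !size_map_poly.
  have [[beta [b0 hb]] hroots] := coreL a0 e12 e13 e23 g0L hf dAL hL dFL hdL hBL.
  split.
    pose bk := lead_coef (G ^+ 2) / lead_coef F^`().
    have lF0 : lead_coef F^`() != 0 by rewrite lead_coef_eq0.
    have lG0 : lead_coef (G ^+ 2) != 0 by rewrite lead_coef_eq0 expf_neq0.
    have hbeta : beta = in_alg L bk.
      have := congr1 lead_coef hb; rewrite mul_polyC lead_coefZ /GL /FL.
      rewrite -rmorphXn lead_coef_map deriv_map lead_coef_map => hl.
      by rewrite /bk fmorph_div hl mulfK // fmorph_eq0.
    exists bk; split; first by rewrite mulf_neq0 ?invr_eq0.
    rewrite mul_polyC; apply: (map_poly_inj (in_alg L)).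
    rewrite map_polyZ -deriv_map rmorphXn -mul_polyC; rewrite hbeta in hb.
    exact: hb.
  have jL : j_inv fL = 1728%:R.
    case: hroots => he.
    - exact: (cubic_j hf wdL he).
    - have hf' : fL = a *: (('X - e1%:P) * ('X - e3%:P) * ('X - e2%:P)).
        by rewrite hf; congr (_ *: _); ring.
      exact: (cubic_j hf' wdL he).
    - have hf' : fL = a *: (('X - e2%:P) * ('X - e3%:P) * ('X - e1%:P)).
        by rewrite hf; congr (_ *: _); ring.
      exact: (cubic_j hf' wdL he).
  move: jL; rewrite /fL j_map -(rmorph_nat (in_alg L)).
  by move/fmorph_inj.
have CB : condC -> condB.
  case=> beta [b0 hb].
  apply: (nat_CB ltF); rewrite ?size_poly_gt0 //.
  by rewrite -size_exp hb size_Cmul.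
split=> //; split.
  by split=> [/keyL[] | /CB].
by case=> [/AB/keyL[] | [/keyL[] | /CB/keyL[]]].
Qed.
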